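(* Let $(x_0:\ldots:x_4)\in\mathbf{P}^4(\mathbb{Q})$ with $x_0x_1x_2x_3x_4\neq0$. Then there is $w\in\mathbb{Q}$ with $w^2=(-3)\Delta'(x_0,\ldots,x_4)$ (for a, equivalently any, choice of rational homogeneous coordinates) if and only if the point $\iota((x_0:\ldots:x_4))=(1/x_0:\ldots:1/x_4)$ gives a $\mathbb{Q}$-rational point on the discriminantal covering, i.e. there is $w'\in\mathbb{Q}$ with $w'^2=(-3)\Delta(1/x_0,\ldots,1/x_4)$.
   Context: The discriminant is $$\Delta(a_0,\ldots,a_4):=\prod_{i_1,\ldots,i_4\in\{0,1\}}\Big(\sqrt{a_1a_2a_3a_4}+(-1)^{i_1}\sqrt{a_0a_2a_3a_4}+(-1)^{i_2}\sqrt{a_0a_1a_3a_4}+(-1)^{i_3}\sqrt{a_0a_1a_2a_4}+(-1)^{i_4}\sqrt{a_0a_1a_2a_3}\Big)\in\mathbb{Q}[a_0,\ldots,a_4]$$ (degree $32$), and $$\Delta'(x_0,\ldots,x_4):=\prod_{i_1,\ldots,i_4\in\{0,1\}}\big(\sqrt{x_0}+(-1)^{i_1}\sqrt{x_1}+(-1)^{i_2}\sqrt{x_2}+(-1)^{i_3}\sqrt{x_3}+(-1)^{i_4}\sqrt{x_4}\big)\in\mathbb{Q}[x_0,\ldots,x_4]$$ (degree $8$). The discriminantal covering is the double covering of $\mathbf{P}^4_{\mathbb{Q}}$ given by $w^2=-3\Delta(a_0,\ldots,a_4)$. The generalized Cremona transform is the birational map $\iota:\mathbf{P}^4\dashrightarrow\mathbf{P}^4$,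 $(a_0:\ldots:a_4)\mapsto(1/a_0:\ldots:1/a_4)$. *)

(* Defs.v *)
(* Delta and Delta' are defined by their defining products of
   square roots, evaluated in the algebraically closed field algC (the value
   does not depend on the choice of square roots, and lies in Q for rational
   arguments). *)
From HB Require Import structures.
From mathcomp Require Import all_boot all_order all_algebra all_field.
Set Implicit Arguments. Unset Strict Implicit. Unset Printing Implicit Defensive.
Import Order.TTheory GRing.Theory Num.Theory.
Local Open Scope ring_scope.

Definition sgnb (b : bool) : algC := (-1) ^+ b.

Definition DeltaP (x0 x1 x2 x3 x4 : algC) : algC :=
  \prod_(i1 : bool) \prod_(i2 : bool) \prod_(i3 : bool) \prod_(i4 : bool)
    (sqrtC x0 + sgnb i1 * sqrtC x1 + sgnb i2 * sqrtC x2
       + sgnb i3 * sqrtC x3 + sgnb i4 * sqrtC x4).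

Definition Delta (a0 a1 a2 a3 a4 : algC) : algC :=
  \prod_(i1 : bool) \prod_(i2 : bool) \prod_(i3 : bool) \prod_(i4 : bool)
    (sqrtC (a1 * a2 * a3 * a4) + sgnb i1 * sqrtC (a0 * a2 * a3 * a4)
       + sgnb i2 * sqrtC (a0 * a1 * a3 * a4) + sgnb i3 * sqrtC (a0 * a1 * a2 * a4)
       + sgnb i4 * sqrtC (a0 * a1 * a2 * a3)).

(* Main.v *)
Require Import Defs.
From HB Require Import structures.
From mathcomp Require Import all_boot all_order all_algebra all_field.
From mathcomp Require Import ring.
Import Order.TTheory GRing.Theory Num.Theory.
Local Open Scope ring_scope.

Lemma sgnbT : sgnb true = -1. Proof. by rewrite /sgnb expr1. Qed.
Lemma sgnbF : sgnb false = 1. Proof. by rewrite /sgnb expr0. Qed.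

Lemma sgnbX a b : sgnb (a (+) b) = sgnb a * sgnb b.
Proof. by case: a; case: b; rewrite /= ?sgnbT ?sgnbF ?mulrNN ?mulr1 ?mul1r. Qed.

Lemma sqrt_sign (a z : algC) : z ^+ 2 = a -> exists e, sqrtC a = sgnb e * z.
Proof.
move=> h.
have : (sqrtC a - z) * (sqrtC a + z) = 0.
  by rewrite -subr_sqr sqrtCK h subrr.
move/eqP; rewrite mulf_eq0 => /orP[/eqP H|/eqP H].
  by exists false; rewrite sgnbF mul1r; apply/eqP; rewrite -subr_eq0 H.
by exists true; rewrite sgnbT mulN1r; apply/eqP; rewrite -addr_eq0 H.
Qed.

Lemma prod_xor (F : bool -> bool -> bool -> bool -> algC) k1 k2 k3 k4 :
  \prod_(i1 : bool) \prod_(i2 : bool) \prod_(i3 : bool) \prod_(i4 : bool)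
     F (i1 (+) k1) (i2 (+) k2) (i3 (+) k3) (i4 (+) k4) =
  \prod_(i1 : bool) \prod_(i2 : bool) \prod_(i3 : bool) \prod_(i4 : bool)
     F i1 i2 i3 i4.
Proof. rewrite !big_bool; case: k1; case: k2; case: k3; case: k4 => /=; ring. Qed.

Lemma prod_const (a : algC) (G : bool -> bool -> bool -> bool -> algC) :
  \prod_(i1 : bool) \prod_(i2 : bool) \prod_(i3 : bool) \prod_(i4 : bool)
     (a * G i1 i2 i3 i4) =
  a ^+ 16 * \prod_(i1 : bool) \prod_(i2 : bool) \prod_(i3 : bool) \prod_(i4 : bool)
     G i1 i2 i3 i4.
Proof. rewrite !big_bool /=; ring. Qed.

Lemma Delta_inv (y0 y1 y2 y3 y4 : algC) :
  y0 * y1 * y2 * y3 * y4 != 0 ->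
  Delta y0^-1 y1^-1 y2^-1 y3^-1 y4^-1 =
  (y0 * y1 * y2 * y3 * y4)^-1 ^+ 8 * DeltaP y0 y1 y2 y3 y4.
Proof.
move=> hP.
have [[[[h0 h1] h2] h3] h4] :
   (((y0 != 0 /\ y1 != 0) /\ y2 != 0) /\ y3 != 0) /\ y4 != 0.
  by move: hP; rewrite !mulf_eq0 !negb_or => /andP[/andP[/andP[/andP[-> ->] ->] ->] ->].
set P := y0 * y1 * y2 * y3 * y4.
set u := sqrtC P^-1.
have hu : u ^+ 2 = P^-1 by rewrite sqrtCK.
have [e0 E0] : exists e, sqrtC (y1^-1 * y2^-1 * y3^-1 * y4^-1) = sgnb e * (u * sqrtC y0).
  by apply: sqrt_sign; rewrite exprMn hu sqrtCK /P; field; rewrite ?h0 ?h1 ?h2 ?h3 ?h4.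
have [e1 E1] : exists e, sqrtC (y0^-1 * y2^-1 * y3^-1 * y4^-1) = sgnb e * (u * sqrtC y1).
  by apply: sqrt_sign; rewrite exprMn hu sqrtCK /P; field; rewrite ?h0 ?h1 ?h2 ?h3 ?h4.
have [e2 E2] : exists e, sqrtC (y0^-1 * y1^-1 * y3^-1 * y4^-1) = sgnb e * (u * sqrtC y2).
  by apply: sqrt_sign; rewrite exprMn hu sqrtCK /P; field; rewrite ?h0 ?h1 ?h2 ?h3 ?h4.
have [e3 E3] : exists e, sqrtC (y0^-1 * y1^-1 * y2^-1 * y4^-1) = sgnb e * (u * sqrtC y3).
  by apply: sqrt_sign; rewrite exprMn hu sqrtCK /P; field; rewrite ?h0 ?h1 ?h2 ?h3 ?h4.
have [e4 E4] : exists e, sqrtC (y0^-1 * y1^-1 * y2^-1 * y3^-1) = sgnb e * (u * sqrtC y4).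
  by apply: sqrt_sign; rewrite exprMn hu sqrtCK /P; field; rewrite ?h0 ?h1 ?h2 ?h3 ?h4.
pose G j1 j2 j3 j4 := sqrtC y0 + sgnb j1 * sqrtC y1 + sgnb j2 * sqrtC y2
       + sgnb j3 * sqrtC y3 + sgnb j4 * sqrtC y4.
have E : forall i1 i2 i3 i4,
  sgnb e0 * (u * sqrtC y0) + sgnb i1 * (sgnb e1 * (u * sqrtC y1))
  + sgnb i2 * (sgnb e2 * (u * sqrtC y2)) + sgnb i3 * (sgnb e3 * (u * sqrtC y3))
  + sgnb i4 * (sgnb e4 * (u * sqrtC y4)) =
  (sgnb e0 * u) * G (i1 (+) (e1 (+) e0)) (i2 (+) (e2 (+) e0)) (i3 (+) (e3 (+) e0))
    (i4 (+) (e4 (+) e0)).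
  move=> i1 i2 i3 i4; rewrite /G !sgnbX.
  by move: E0; case: e0 => _; rewrite ?sgnbT ?sgnbF; ring.
rewrite /Delta E0 E1 E2 E3 E4.
under eq_bigr => i1 _ do under eq_bigr => i2 _ do under eq_bigr => i3 _ do
  under eq_bigr => i4 _ do rewrite E.
rewrite (prod_const _ (fun i1 i2 i3 i4 => G (i1 (+) (e1 (+) e0)) (i2 (+) (e2 (+) e0))
   (i3 (+) (e3 (+) e0)) (i4 (+) (e4 (+) e0)))).
rewrite (prod_xor G).
have -> : (sgnb e0 * u) ^+ 16 = P^-1 ^+ 8.
  rewrite exprMn (_ : 16 = 2 * 8)%N // !exprM hu.
  by clear E; move: E0; case: e0 => _; rewrite ?sgnbT ?sgnbF; ring.
by [].
Qed.

Theorem mainTheorem6 (x0 x1 x2 x3 x4 : rat) :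
  x0 * x1 * x2 * x3 * x4 != 0 ->
  ((exists w : rat, (ratr w : algC) ^+ 2 =
      -3 * DeltaP (ratr x0) (ratr x1) (ratr x2) (ratr x3) (ratr x4))
   <->
   (exists w' : rat, (ratr w' : algC) ^+ 2 =
      -3 * Delta (ratr x0^-1) (ratr x1^-1) (ratr x2^-1) (ratr x3^-1) (ratr x4^-1))).
Proof.
move=> hx.
have hP : (ratr x0 : algC) * ratr x1 * ratr x2 * ratr x3 * ratr x4 != 0.
  by rewrite -!rmorphM fmorph_eq0.
rewrite !fmorphV Delta_inv //.
split=> -[w hw].
  exists (w * (x0 * x1 * x2 * x3 * x4)^-1 ^+ 4).
  rewrite rmorphM rmorphXn fmorphV !rmorphM exprMn hw; ring.
exists (w * (x0 * x1 * x2 * x3 * x4) ^+ 4).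
rewrite rmorphM rmorphXn !rmorphM exprMn hw; field.
by move: hP; rewrite !mulf_eq0 !negb_or => /andP[/andP[/andP[/andP[-> ->] ->] ->] ->].
Qed.
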